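(* Let $m\ge2$ and let $\mathcal{C}\in\mathbb{S}_{m,n}$ be the symmetric Cauchy tensor with generating vector $c=(c_1,\dots,c_n)^T$, where $c>0$. The following are equivalent: (i) $c_1,\dots,c_n$ are mutually distinct; (ii) $\mathcal{C}$ is strongly doubly nonnegative; (iii) $\mathcal{C}$ is strongly completely positive.
   Context: The symmetric Cauchy tensor with generating vector $c$ has entries $1/(c_{i_1}+\dots+c_{i_m})$. $(\mathcal{A}x^{m-1})_i=\sum_{i_2,\dots,i_m}a_{ii_2\ldots i_m}x_{i_2}\cdots x_{i_m}$; an H-eigenvalue is $\lambda\in\mathbb{R}$ with $\mathcal{A}x^{m-1}=\lambda(x_i^{m-1})_i$ for some nonzero $x\in\mathbb{R}^n$. Strongly doubly nonnegative: all entries nonnegative and all H-eigenvalues positive. Strongly completely positive: $\mathcal{A}=\sum_{k=1}^r(u^{(k)})^m$ with $u^{(k)}\in\mathbb{R}^n_+$ and $\mathrm{span}\{u^{(1)},\dots,u^{(r)}\}=\mathbb{R}^n$, where $(u^m)_{i_1\ldots i_m}=u_{i_1}\cdots u_{i_m}$. *)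

(* Defs.v *)
From Stdlib Require Import Reals List Lra.
Import ListNotations.
Open Scope R_scope.

(* A tensor of order m and dimension n is a function on index lists
   [i1; ...; im] (length m, entries < n). *)
Definition tensor := list nat -> R.

Definition rsum (n : nat) (f : nat -> R) : R :=
  fold_right Rplus 0 (map f (seq 0 n)).

Definition rprod (f : nat -> R) (idx : list nat) : R :=
  fold_right Rmult 1 (map f idx).

Fixpoint sum_tuples (n k : nat) (F : list nat -> R) : R :=
  match k with
  | O => F nil
  | S k' => rsum n (fun j => sum_tuples n k' (fun l => F (j :: l)))
  end.

Definition valid_index (m n : nat) (idx : list nat) : Prop :=
  length idx = m /\ Forall (fun i => (i < n)%nat) idx.

Definition cauchy_tensor (c : nat -> R) : tensor :=
  fun idx => / fold_right Rplus 0 (map c idx).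

(* (A x^{m-1})_i = sum_{i2..im} a_{i i2 .. im} x_{i2} ... x_{im} *)
Definition tensor_apply (m n : nat) (A : tensor) (x : nat -> R) (i : nat) : R :=
  sum_tuples n (m - 1) (fun l => A (i :: l) * rprod x l).

Definition H_eigenvalue (m n : nat) (A : tensor) (lam : R) : Prop :=
  exists x : nat -> R,
    (exists i, (i < n)%nat /\ x i <> 0) /\
    forall i, (i < n)%nat -> tensor_apply m n A x i = lam * x i ^ (m - 1).

Definition strongly_doubly_nonnegative (m n : nat) (A : tensor) : Prop :=
  (forall idx, valid_index m n idx -> 0 <= A idx) /\
  (forall lam, H_eigenvalue m n A lam -> 0 < lam).

(* A = sum_{k<r} (u^(k))^m with u^(k) in R^n_+ spanning R^n *)
Definition strongly_completely_positive (m n : nat) (A : tensor) : Prop :=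
  exists (r : nat) (u : nat -> nat -> R),
    (forall k i, (k < r)%nat -> (i < n)%nat -> 0 <= u k i) /\
    (forall idx, valid_index m n idx ->
       A idx = rsum r (fun k => rprod (u k) idx)) /\
    (forall y : nat -> R, exists a : nat -> R,
       forall i, (i < n)%nat -> y i = rsum r (fun k => a k * u k i)).

(* Main.v *)
Require Import Defs.
From Stdlib Require Import Reals List Lra Lia Classical ClassicalEpsilon ZArith.
Import ListNotations.
Open Scope R_scope.

Lemma fold_Rplus_app l1 l2 : fold_right Rplus 0 (l1 ++ l2) = fold_right Rplus 0 l1 + fold_right Rplus 0 l2.
Proof. induction l1; simpl. lra. rewrite IHl1; lra. Qed.
Lemma rsum_S n f : rsum (S n) f = rsum n f + f n.
Proof. unfold rsum. rewrite seq_S, map_app, fold_Rplus_app. simpl. lra. Qed.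
Lemma rsum_0 f : rsum 0 f = 0.
Proof. reflexivity. Qed.
Lemma rsum_ext n f g : (forall i, (i < n)%nat -> f i = g i) -> rsum n f = rsum n g.
Proof. induction n; intros H. reflexivity. rewrite !rsum_S, IHn, H; auto. Qed.
Lemma rsum_plus n f g : rsum n (fun i => f i + g i) = rsum n f + rsum n g.
Proof. induction n. unfold rsum; simpl; lra. rewrite !rsum_S, IHn; lra. Qed.
Lemma rsum_minus n f g : rsum n (fun i => f i - g i) = rsum n f - rsum n g.
Proof. induction n. unfold rsum; simpl; lra. rewrite !rsum_S, IHn; lra. Qed.
Lemma rsum_scal n a f : rsum n (fun i => a * f i) = a * rsum n f.
Proof. induction n. unfold rsum; simpl; lra. rewrite !rsum_S, IHn; lra. Qed.
Lemma rsum_scal_r n a f : rsum n (fun i => f i * a) = rsum n f * a.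
Proof. induction n. unfold rsum; simpl; lra. rewrite !rsum_S, IHn; lra. Qed.
Lemma rsum_zero n : rsum n (fun _ => 0) = 0.
Proof. induction n. reflexivity. rewrite rsum_S, IHn; lra. Qed.
Lemma rsum_exchange n r (f : nat -> nat -> R) :
  rsum n (fun i => rsum r (fun k => f i k)) = rsum r (fun k => rsum n (fun i => f i k)).
Proof.
  induction n. rewrite rsum_0. symmetry. apply (rsum_zero r).
  rewrite rsum_S, IHn. rewrite <- rsum_plus. apply rsum_ext; intros; rewrite rsum_S; lra.
Qed.
Lemma rsum_shift n f : rsum (S n) f = f 0%nat + rsum n (fun i => f (S i)).
Proof.
  unfold rsum. simpl. f_equal. rewrite <- seq_shift, map_map. reflexivity.
Qed.
Lemma rsum_app a b f : rsum (a + b) f = rsum a f + rsum b (fun k => f (a + k)%nat).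
Proof.
  induction b. rewrite Nat.add_0_r, rsum_0; lra.
  rewrite Nat.add_succ_r, !rsum_S, IHb; lra.
Qed.
Lemma rsum_nonneg n f : (forall i, (i < n)%nat -> 0 <= f i) -> 0 <= rsum n f.
Proof. induction n; intros H. rewrite rsum_0; lra. rewrite rsum_S. pose proof (H n ltac:(lia)). pose proof (IHn ltac:(intros; apply H; lia)). lra. Qed.
Lemma rsum_le n f g : (forall i, (i < n)%nat -> f i <= g i) -> rsum n f <= rsum n g.
Proof. induction n; intros H. rewrite !rsum_0; lra. rewrite !rsum_S. pose proof (H n ltac:(lia)). pose proof (IHn ltac:(intros; apply H; lia)). lra. Qed.
Lemma rsum_term_le n f i : (forall i, (i < n)%nat -> 0 <= f i) -> (i < n)%nat -> f i <= rsum n f.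
Proof.
  induction n; intros H Hi. lia. rewrite rsum_S.
  assert (0 <= rsum n f) by (apply rsum_nonneg; intros; apply H; lia).
  destruct (Nat.eq_dec i n). subst. lra.
  pose proof (IHn ltac:(intros; apply H; lia) ltac:(lia)). pose proof (H n ltac:(lia)). lra.
Qed.
Lemma rsum_pos n f i : (forall i, (i < n)%nat -> 0 <= f i) -> (i < n)%nat -> 0 < f i -> 0 < rsum n f.
Proof. intros. pose proof (rsum_term_le n f i H H0). lra. Qed.
Lemma rsum_nonneg_zero n f : (forall i, (i < n)%nat -> 0 <= f i) -> rsum n f = 0 ->
  forall i, (i < n)%nat -> f i = 0.
Proof.
  intros H H0 i Hi. pose proof (rsum_term_le n f i H Hi). pose proof (H i Hi). lra.
Qed.
Lemma rsum_abs n f : Rabs (rsum n f) <= rsum n (fun i => Rabs (f i)).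
Proof.
  induction n. rewrite !rsum_0, Rabs_R0; lra.
  rewrite !rsum_S. eapply Rle_trans. apply Rabs_triang. lra.
Qed.
Lemma rsum_ind n i : (i < n)%nat -> rsum n (fun t => if Nat.eqb t i then 1 else 0) = 1.
Proof.
  induction n; intros Hi. lia. rewrite rsum_S.
  destruct (Nat.eq_dec i n).
  - subst. rewrite Nat.eqb_refl.
    rewrite (rsum_ext n _ (fun _ => 0)). rewrite rsum_zero; lra.
    intros t Ht. destruct (Nat.eqb_spec t n); [lia|reflexivity].
  - rewrite IHn by lia. destruct (Nat.eqb_spec n i); [lia|lra].
Qed.
Lemma rsum_delta n g i : (i < n)%nat -> rsum n (fun t => g t * (if Nat.eqb i t then 1 else 0)) = g i.
Proof.
  intro Hi. rewrite (rsum_ext n _ (fun t => g i * (if Nat.eqb t i then 1 else 0))).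
  rewrite rsum_scal, rsum_ind; auto; lra.
  intros t _. destruct (Nat.eqb_spec i t), (Nat.eqb_spec t i); subst; try lia; lra.
Qed.
Lemma rsum_telescope n f : rsum n (fun k => f (S k) - f k) = f n - f 0%nat.
Proof. induction n. rewrite rsum_0; lra. rewrite rsum_S, IHn; lra. Qed.

Lemma sum_tuples_ext n k F G :
  (forall l, length l = k -> Forall (fun i => (i < n)%nat) l -> F l = G l) ->
  sum_tuples n k F = sum_tuples n k G.
Proof.
  revert F G; induction k; intros F G H; simpl.
  apply H; auto.
  apply rsum_ext; intros j Hj. apply IHk. intros l Hl Hf. apply H. simpl; auto. constructor; auto.
Qed.
Lemma sum_tuples_rsum n r k (F : nat -> list nat -> R) :
  sum_tuples n k (fun l => rsum r (fun t => F t l)) = rsum r (fun t => sum_tuples n k (F t)).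
Proof.
  revert F; induction k; intros F; simpl. reflexivity.
  rewrite (rsum_ext n _ (fun j => rsum r (fun t => sum_tuples n k (fun l => F t (j :: l))))).
  apply rsum_exchange. intros j _. apply (IHk (fun t l => F t (j :: l))).
Qed.
Lemma sum_tuples_scal n k a F : sum_tuples n k (fun l => a * F l) = a * sum_tuples n k F.
Proof.
  revert F; induction k; intros F; simpl. reflexivity.
  rewrite <- rsum_scal. apply rsum_ext; intros. apply (IHk (fun l => F (i :: l))).
Qed.
Lemma sum_tuples_prod n k f : sum_tuples n k (fun l => rprod f l) = (rsum n f) ^ k.
Proof.
  induction k; simpl. reflexivity.
  rewrite (rsum_ext n _ (fun j => f j * (rsum n f) ^ k)).
  rewrite rsum_scal_r; lra.
  intros j _. rewrite <- IHk, <- sum_tuples_scal. apply sum_tuples_ext. intros; reflexivity.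
Qed.
Lemma rprod_mult f g l : rprod f l * rprod g l = rprod (fun j => f j * g j) l.
Proof. induction l; unfold rprod in *; simpl. lra. rewrite <- IHl; lra. Qed.
Lemma rprod_nonzero f l t : rprod f l <> 0 -> In t l -> f t <> 0.
Proof.
  induction l; unfold rprod in *; simpl; intros H Hin. contradiction.
  destruct Hin as [<-|Hin]. intro E; apply H; rewrite E; lra.
  apply IHl; auto. intro E; apply H; rewrite E; lra.
Qed.
Lemma fold_sum_const (c : nat -> R) g l : (forall t, In t l -> c t = g) ->
  fold_right Rplus 0 (map c l) = INR (length l) * g.
Proof.
  induction l; simpl; intros H. lra.
  rewrite IHl, H by auto. destruct (length l); simpl; lra.
Qed.

Lemma tensor_apply_scp m n A r u x i : (2 <= m)%nat ->
  (forall idx, valid_index m n idx -> A idx = rsum r (fun k => rprod (u k) idx)) ->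
  (i < n)%nat ->
  tensor_apply m n A x i = rsum r (fun k => u k i * (rsum n (fun j => u k j * x j)) ^ (m - 1)).
Proof.
  intros hm HA Hi. unfold tensor_apply.
  rewrite (sum_tuples_ext n (m - 1) _ (fun l => rsum r (fun k => u k i * rprod (fun j => u k j * x j) l))).
  - rewrite sum_tuples_rsum. apply rsum_ext; intros k _.
    rewrite sum_tuples_scal, sum_tuples_prod. reflexivity.
  - intros l Hl Hf. rewrite HA. rewrite <- rsum_scal_r. apply rsum_ext; intros k _.
    rewrite <- rprod_mult. unfold rprod; simpl. lra.
    split. simpl; lia. constructor; auto.
Qed.

Lemma pow_even_nonneg x k : Nat.Even k -> 0 <= x ^ k.
Proof. intros [q ->]. rewrite pow_mult. apply pow_le. nra. Qed.
Lemma pow_even_pos x k : Nat.Even k -> x <> 0 -> 0 < x ^ k.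
Proof. intros [q ->] H. rewrite pow_mult. apply pow_lt. nra. Qed.

Lemma scp_sdn m n A : (2 <= m)%nat -> strongly_completely_positive m n A ->
  strongly_doubly_nonnegative m n A.
Proof.
  intros hm [r [u [Hu [HA Hspan]]]]. split.
  - intros idx Hv. rewrite HA by auto. apply rsum_nonneg. intros k Hk.
    destruct Hv as [_ Hf]. clear HA. induction Hf; unfold rprod in *; simpl. lra.
    apply Rmult_le_pos; auto.
  - intros lam [x [[i0 [Hi0 Hx0]] Heig]].
    assert (Hpm : forall y, y ^ m = y * y ^ (m - 1)).
    { intros y. destruct m as [|m']; [lia|]. simpl. rewrite Nat.sub_0_r. reflexivity. }
    set (P k := rsum n (fun j => u k j * x j)).
    assert (Happ : forall i, (i < n)%nat -> rsum r (fun k => u k i * P k ^ (m - 1)) = lam * x i ^ (m - 1)).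
    { intros i Hi. rewrite <- Heig by auto. symmetry. apply tensor_apply_scp; auto. }
    assert (HP : exists k, (k < r)%nat /\ P k <> 0).
    { apply NNPP; intro Hn.
      destruct (Hspan x) as [a Ha].
      assert (E : rsum n (fun i => x i * x i) = rsum r (fun k => a k * P k)).
      { rewrite (rsum_ext n _ (fun i => rsum r (fun k => x i * (a k * u k i)))).
        rewrite rsum_exchange. apply rsum_ext; intros k _. unfold P.
        rewrite <- rsum_scal. apply rsum_ext; intros; lra.
        intros i Hi. rewrite rsum_scal, <- Ha by auto. reflexivity. }
      rewrite (rsum_ext r _ (fun _ => 0)) in E. rewrite rsum_zero in E.
      assert (0 < rsum n (fun i => x i * x i)).
      { apply (rsum_pos n _ i0); auto. intros; nra.
        pose proof (Rmult_integral_contrapositive_currified _ _ Hx0 Hx0); nra. }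
      lra.
      intros k Hk. destruct (Req_dec (P k) 0) as [->|Hne]. lra. exfalso; apply Hn; eauto. }
    destruct HP as [k0 [Hk0 HPk0]].
    assert (Hsum : rsum r (fun k => P k ^ m) = lam * rsum n (fun i => x i ^ m)).
    { rewrite <- rsum_scal.
      rewrite (rsum_ext n _ (fun i => x i * rsum r (fun k => u k i * P k ^ (m - 1)))).
      rewrite (rsum_ext n _ (fun i => rsum r (fun k => x i * (u k i * P k ^ (m - 1))))).
      rewrite rsum_exchange. apply rsum_ext; intros k _.
      rewrite (rsum_ext n _ (fun i => (u k i * x i) * P k ^ (m - 1))).
      rewrite rsum_scal_r. fold (P k).
      rewrite Hpm; lra.
      intros; lra.
      intros; rewrite rsum_scal; reflexivity.
      intros i Hi. rewrite Happ by auto. rewrite Hpm; lra. }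
    destruct (Nat.Even_or_Odd m) as [Hev|Hod].
    + assert (A1 : 0 < rsum r (fun k => P k ^ m)).
      { apply (rsum_pos r _ k0); auto. intros; apply pow_even_nonneg; auto. apply pow_even_pos; auto. }
      assert (A2 : 0 < rsum n (fun i => x i ^ m)).
      { apply (rsum_pos n _ i0); auto. intros; apply pow_even_nonneg; auto. apply pow_even_pos; auto. }
      nra.
    + assert (Hev : Nat.Even (m - 1)).
      { destruct Hod as [q Hq]. exists q. lia. }
      assert (Hnn : forall i, (i < n)%nat -> forall k, (k < r)%nat -> 0 <= u k i * P k ^ (m - 1)).
      { intros. apply Rmult_le_pos. apply Hu; auto. apply pow_even_nonneg; auto. }
      assert (L0 : 0 <= lam * x i0 ^ (m - 1)).
      { rewrite <- Happ by auto. apply rsum_nonneg; auto. }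
      pose proof (pow_even_pos (x i0) (m - 1) Hev Hx0) as Xp.
      destruct (Rtotal_order lam 0) as [Hl|[Hl|Hl]]; [nra| |lra].
      exfalso. subst lam. apply HPk0.
      assert (Z : forall i, (i < n)%nat -> u k0 i * P k0 ^ (m - 1) = 0).
      { intros i Hi. apply (rsum_nonneg_zero r (fun k => u k i * P k ^ (m - 1))); auto.
        rewrite Happ by auto; lra. }
      assert (Z2 : P k0 ^ (m - 1) * P k0 = 0).
      { unfold P at 2. rewrite <- rsum_scal.
        rewrite (rsum_ext n _ (fun _ => 0)). apply rsum_zero.
        intros i Hi. specialize (Z i Hi). transitivity ((u k0 i * P k0 ^ (m - 1)) * x i). ring. rewrite Z; ring. }
      apply Rmult_integral in Z2. destruct Z2 as [Z2|Z2]; auto.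
      destruct (Req_dec (P k0) 0) as [E|E]; auto. exfalso; apply (pow_nonzero _ (m - 1) E); auto.
Qed.

Lemma sdn_distinct m n c : (2 <= m)%nat ->
  strongly_doubly_nonnegative m n (cauchy_tensor c) ->
  forall i j, (i < n)%nat -> (j < n)%nat -> i <> j -> c i <> c j.
Proof.
  intros hm [_ Hev] i j Hi Hj Hij Hc.
  set (x t := (if Nat.eqb t i then 1 else 0) - (if Nat.eqb t j then 1 else 0)).
  assert (H0 : H_eigenvalue m n (cauchy_tensor c) 0).
  { exists x. split.
    - exists i. split; auto. unfold x. rewrite Nat.eqb_refl.
      destruct (Nat.eqb_spec i j); [lia|lra].
    - intros k Hk. rewrite Rmult_0_l. unfold tensor_apply.
      rewrite (sum_tuples_ext n (m - 1) _ (fun l => / (c k + INR (m - 1) * c i) * rprod x l)).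
      rewrite sum_tuples_scal, sum_tuples_prod.
      assert (Hs : rsum n x = 0).
      { unfold x. rewrite rsum_minus, !rsum_ind by auto. lra. }
      rewrite Hs. rewrite pow_i by lia. lra.
      intros l Hl Hf. destruct (Req_dec (rprod x l) 0) as [E|E].
      + rewrite E; lra.
      + unfold cauchy_tensor. simpl. rewrite (fold_sum_const c (c i) l), Hl. reflexivity.
        intros t Ht. pose proof (rprod_nonzero x l t E Ht) as Hx. unfold x in Hx.
        destruct (Nat.eqb_spec t i). subst; auto.
        destruct (Nat.eqb_spec t j). subst; auto. lra. }
  pose proof (Hev 0 H0). lra.
Qed.

Lemma lin_deriv k x : derivable_pt_lim (fun y => k * y) x k.
Proof.
  pose proof (derivable_pt_lim_mult (fun _ => k) (fun y => y) x 0 1 (derivable_pt_lim_const k x) (derivable_pt_lim_id x)) as H.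
  unfold mult_fct in H. replace (0 * x + k * 1) with k in H by ring. exact H.
Qed.

Lemma gsum_deriv q (a b : nat -> R) x :
  derivable_pt_lim (fun y => rsum q (fun i => a i * exp (b i * y))) x
    (rsum q (fun i => a i * b i * exp (b i * x))).
Proof.
  induction q.
  - unfold rsum; simpl. apply derivable_pt_lim_const.
  - rewrite rsum_S.
    apply (derivable_pt_lim_ext (fun y => rsum q (fun i => a i * exp (b i * y)) + a q * exp (b q * y))).
    { intros; rewrite rsum_S; reflexivity. }
    apply derivable_pt_lim_plus. apply IHq.
    replace (a q * b q * exp (b q * x)) with (a q * (exp (b q * x) * b q)) by ring.
    apply derivable_pt_lim_scal.
    apply (derivable_pt_lim_comp (fun y => b q * y) exp).
    apply lin_deriv.
    apply derivable_pt_lim_exp.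
Qed.

Lemma descartes p : forall (e l z : nat -> R),
  (forall i j, (i < p)%nat -> (j < p)%nat -> i <> j -> e i <> e j) ->
  (forall j, (S j < p)%nat -> z j < z (S j)) ->
  (forall j, (j < p)%nat -> rsum p (fun i => l i * exp (e i * z j)) = 0) ->
  forall i, (i < p)%nat -> l i = 0.
Proof.
  induction p as [|q IH]; intros e l z He Hz Hf i Hi. lia.
  set (g y := l 0%nat + rsum q (fun i => l (S i) * exp ((e (S i) - e 0%nat) * y))).
  set (g' y := rsum q (fun i => l (S i) * (e (S i) - e 0%nat) * exp ((e (S i) - e 0%nat) * y))).
  assert (Hg : forall y, g y = exp (- (e 0%nat * y)) * rsum (S q) (fun i => l i * exp (e i * y))).
  { intros y. unfold g. rewrite rsum_shift. rewrite Rmult_plus_distr_l.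
    rewrite <- rsum_scal. f_equal.
    - rewrite <- Rmult_assoc, (Rmult_comm _ (l 0%nat)), Rmult_assoc, <- exp_plus.
      replace (- (e 0%nat * y) + e 0%nat * y) with 0 by ring. rewrite exp_0; ring.
    - apply rsum_ext; intros. rewrite <- Rmult_assoc, (Rmult_comm _ (l (S i0))), Rmult_assoc, <- exp_plus.
      f_equal. f_equal. ring. }
  assert (Hg0 : forall j, (j < S q)%nat -> g (z j) = 0).
  { intros j Hj. rewrite Hg, Hf by auto. ring. }
  assert (Hd : forall y, derivable_pt_lim g y (g' y)).
  { intros y. unfold g, g'.
    apply (derivable_pt_lim_ext (fun y => l 0%nat + rsum q (fun i => l (S i) * exp ((e (S i) - e 0%nat) * y)))).
    intros; reflexivity.
    replace (rsum q (fun i => l (S i) * (e (S i) - e 0%nat) * exp ((e (S i) - e 0%nat) * y)))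
      with (0 + rsum q (fun i => l (S i) * (e (S i) - e 0%nat) * exp ((e (S i) - e 0%nat) * y))) by ring.
    apply derivable_pt_lim_plus. apply derivable_pt_lim_const.
    apply (gsum_deriv q (fun i => l (S i)) (fun i => e (S i) - e 0%nat)). }
  assert (Hw : forall j, exists w, ((j < q)%nat -> z j < w < z (S j) /\ g' w = 0)).
  { intros j. destruct (Compare_dec.lt_dec j q) as [Hj|Hj].
    - destruct (MVT_cor2 g g' (z j) (z (S j))) as [w [Hw1 Hw2]].
      apply Hz; lia. intros; apply Hd.
      exists w. intros _. split; auto.
      rewrite !Hg0 in Hw1 by lia. pose proof (Hz j ltac:(lia)).
      assert (g' w * (z (S j) - z j) = 0) by lra.
      apply Rmult_integral in H0. destruct H0; auto. lra.
    - exists 0. intros; lia. }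
  set (w j := proj1_sig (constructive_indefinite_description _ (Hw j))).
  assert (Hwp : forall j, (j < q)%nat -> z j < w j < z (S j) /\ g' (w j) = 0).
  { intros j Hj. unfold w. destruct (constructive_indefinite_description _ (Hw j)); simpl; auto. }
  assert (Hl' : forall i, (i < q)%nat -> l (S i) * (e (S i) - e 0%nat) = 0).
  { apply (IH (fun i => e (S i) - e 0%nat) (fun i => l (S i) * (e (S i) - e 0%nat)) w).
    - intros a b Ha Hb Hab E. apply (He (S a) (S b)); try lia. lra.
    - intros j Hj. pose proof (Hwp j ltac:(lia)). pose proof (Hwp (S j) Hj). lra.
    - intros j Hj. destruct (Hwp j Hj) as [_ G]. rewrite <- G. reflexivity. }
  assert (Hl : forall i, (i < q)%nat -> l (S i) = 0).
  { intros i' Hi'. pose proof (Hl' i' Hi'). apply Rmult_integral in H. destruct H; auto.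
    exfalso. apply (He (S i') 0%nat); try lia. lra. }
  assert (L0 : l 0%nat = 0).
  { pose proof (Hg0 0%nat ltac:(lia)) as G. unfold g in G.
    rewrite (rsum_ext q _ (fun _ => 0)) in G. rewrite rsum_zero in G. lra.
    intros; rewrite Hl by auto; ring. }
  destruct i. auto. apply Hl; lia.
Qed.

Definition solve_stmt := forall (p : nat) (f : nat -> nat -> R),
  (forall l : nat -> R, (forall j, (j < p)%nat -> rsum p (fun i => l i * f i j) = 0) ->
      forall i, (i < p)%nat -> l i = 0) ->
  forall b : nat -> R, exists g : nat -> R,
    forall i, (i < p)%nat -> rsum p (fun j => f i j * g j) = b i.
Module LA.
From mathcomp Require Import all_boot all_algebra.
From mathcomp Require Import Rstruct.
Import GRing.Theory.
Local Open Scope ring_scope.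
Lemma rsum_big (p : nat) (F : nat -> R) : rsum p F = (\sum_(j < p) F j)%R.
Proof.
elim: p => [|p IH]. by rewrite big_ord0.
by rewrite big_ord_recr /= rsum_S IH.
Qed.
Lemma solve : solve_stmt.
Proof.
move=> p f Hker b.
pose A : 'M[R]_p := \matrix_(i < p, j < p) f i j.
have Hfree : row_free A.
  rewrite -kermx_eq0; apply/eqP/row_matrixP => k; rewrite row0.
  set v := row k (kermx A).
  have Hv : v *m A = 0 by rewrite /v -row_mul mulmx_ker row0.
  apply/rowP => j; rewrite [RHS]mxE.
  pose l := fun i : nat => match (ltnP i p) with LtnNotGeq h => v 0 (Ordinal h) | _ => 0%R end.
  have El : forall i : 'I_p, l i = v 0 i.
    move=> i; rewrite /l; case: ltnP => h; last by move: (ltn_ord i); rewrite ltnNge h.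
    by congr (v _ _); apply: val_inj.
  rewrite -El; apply: (Hker l); last exact/ltP/ltn_ord.
  move=> j' /ltP hj'.
  transitivity ((v *m A) 0 (Ordinal hj')); last by rewrite Hv mxE.
  rewrite mxE rsum_big; apply: eq_bigr => i _; rewrite El !mxE; reflexivity.
have Hu : A \in unitmx by move: Hfree; rewrite row_free_unit.
pose bv : 'cV[R]_p := \col_(i < p) b i.
pose gv := invmx A *m bv.
pose g := fun j : nat => match (ltnP j p) with LtnNotGeq h => gv (Ordinal h) 0 | _ => 0%R end.
have Eg : forall j : 'I_p, g j = gv j 0.
  move=> j; rewrite /g; case: ltnP => h; last by move: (ltn_ord j); rewrite ltnNge h.
  by congr (gv _ _); apply: val_inj.
exists g => i /ltP hi.
have E : A *m gv = bv by rewrite /gv mulmxA mulmxV // mul1mx.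
transitivity ((A *m gv) (Ordinal hi) 0); last by rewrite E mxE.
rewrite mxE rsum_big; apply: eq_bigr => j _; rewrite Eg !mxE; reflexivity.
Qed.
End LA.

Lemma solve_bound p (f : nat -> nat -> R) :
  (forall l : nat -> R, (forall j, (j < p)%nat -> rsum p (fun i => l i * f i j) = 0) ->
      forall i, (i < p)%nat -> l i = 0) ->
  exists L, 0 < L /\ forall (Rv : nat -> R) eps, 0 <= eps -> (forall t, (t < p)%nat -> Rabs (Rv t) <= eps) ->
    exists g : nat -> R, (forall i, (i < p)%nat -> rsum p (fun j => f i j * g j) = Rv i) /\
      (forall j, (j < p)%nat -> Rabs (g j) <= L * eps).
Proof.
  intros Hker.
  assert (HG : forall t : nat, exists g : nat -> R, forall i, (i < p)%nat ->
            rsum p (fun j => f i j * g j) = if Nat.eqb i t then 1 else 0).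
  { intros t. apply (LA.solve p f Hker). }
  set (G t := proj1_sig (constructive_indefinite_description _ (HG t))).
  assert (HGp : forall t i, (i < p)%nat -> rsum p (fun j => f i j * G t j) = if Nat.eqb i t then 1 else 0).
  { intros t. unfold G. destruct (constructive_indefinite_description _ (HG t)); simpl; auto. }
  set (S0 := rsum p (fun j => rsum p (fun t => Rabs (G t j)))).
  assert (HS0 : 0 <= S0) by (apply rsum_nonneg; intros; apply rsum_nonneg; intros; apply Rabs_pos).
  exists (1 + S0). split. lra.
  intros Rv eps Heps HR.
  exists (fun j => rsum p (fun t => Rv t * G t j)). split.
  - intros i Hi.
    rewrite (rsum_ext p _ (fun j => rsum p (fun t => Rv t * (f i j * G t j)))).
    rewrite rsum_exchange.
    rewrite (rsum_ext p _ (fun t => Rv t * (if Nat.eqb i t then 1 else 0))).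
    apply rsum_delta; auto.
    intros t _. rewrite rsum_scal, HGp; auto.
    intros j _. rewrite <- rsum_scal. apply rsum_ext; intros; ring.
  - intros j Hj. eapply Rle_trans. apply rsum_abs.
    eapply Rle_trans. apply (rsum_le p _ (fun t => eps * Rabs (G t j))).
    { intros t Ht. rewrite Rabs_mult. apply Rmult_le_compat_r. apply Rabs_pos. auto. }
    rewrite rsum_scal.
    assert (rsum p (fun t => Rabs (G t j)) <= S0).
    { apply (rsum_term_le p (fun j => rsum p (fun t => Rabs (G t j)))); auto.
      intros; apply rsum_nonneg; intros; apply Rabs_pos. }
    nra.
Qed.

Lemma nat_ge (x : R) : exists N : nat, x <= INR N.
Proof.
  destruct (archimed x) as [H1 H2].
  destruct (Z_lt_le_dec (up x) 0) as [Hz|Hz].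
  - exists 0%nat. simpl. apply IZR_lt in Hz. lra.
  - exists (Z.to_nat (up x)). rewrite INR_IZR_INZ, Z2Nat.id by auto. lra.
Qed.

Lemma exp_ge_1x x : 1 + x <= exp x.
Proof. destruct (Req_dec x 0) as [->|H]. rewrite exp_0; lra. left; apply exp_ineq1; auto. Qed.

Lemma exp_quad x : 0 <= x <= 1/2 -> 0 <= exp x - 1 - x <= 2 * x ^ 2.
Proof.
  intros Hx. split. pose proof (exp_ge_1x x); lra.
  pose proof (exp_ge_1x (- x)) as H1.
  assert (E : exp x * exp (- x) = 1) by (rewrite <- exp_plus; replace (x + - x) with 0 by ring; apply exp_0).
  pose proof (exp_pos x). pose proof (exp_pos (-x)).
  assert (exp x * (1 - x) <= 1) by nra.
  assert (exp x - 1 - x <= x ^ 2 / (1 - x)).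
  { apply (Rmult_le_reg_r (1 - x)). lra. unfold Rdiv. rewrite Rmult_assoc, Rinv_l by lra. nra. }
  assert (x ^ 2 / (1 - x) <= 2 * x ^ 2).
  { apply (Rmult_le_reg_r (1 - x)). lra. unfold Rdiv. rewrite Rmult_assoc, Rinv_l by lra. nra. }
  lra.
Qed.

Lemma piece s b h : 0 < s -> 0 <= h -> s * h <= 1/2 -> b <= 0 ->
  0 <= (exp (s * (b + h)) - exp (s * b)) / s - h * exp (s * b) <= 2 * s * h ^ 2.
Proof.
  intros Hs Hh Hsh Hb.
  replace ((exp (s * (b + h)) - exp (s * b)) / s - h * exp (s * b))
    with (exp (s * b) * (exp (s * h) - 1 - s * h) / s).
  2:{ rewrite Rmult_plus_distr_l, exp_plus. field. lra. }
  destruct (exp_quad (s * h)) as [Q1 Q2]. nra.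
  assert (Eb : 0 < exp (s * b) <= 1).
  { split. apply exp_pos. rewrite <- exp_0. destruct (Req_dec (s*b) 0) as [E|E]. rewrite E; lra.
    left; apply exp_increasing; nra. }
  split.
  - unfold Rdiv. apply Rmult_le_pos. nra. left; apply Rinv_0_lt_compat; auto.
  - apply (Rmult_le_reg_r s). auto. unfold Rdiv. rewrite Rmult_assoc, Rinv_l by lra. nra.
Qed.

Definition seg s a l := (exp (s * (a + l)) - exp (s * a)) / s.
Definition sumA s (A : list (R * R)) := fold_right Rplus 0 (map (fun a => fst a * exp (s * snd a)) A).
Definition atoms_seg a l M := map (fun k => (l / INR M, a + INR k * (l / INR M))) (seq 0 M).

Lemma sumA_app s A B : sumA s (A ++ B) = sumA s A + sumA s B.
Proof. unfold sumA. rewrite map_app, fold_Rplus_app. reflexivity. Qed.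
Lemma sumA_seq s (g : nat -> R * R) M : sumA s (map g (seq 0 M)) = rsum M (fun k => fst (g k) * exp (s * snd (g k))).
Proof. unfold sumA, rsum. rewrite map_map. reflexivity. Qed.
Lemma sumA_flat s (g : nat -> list (R * R)) p : sumA s (flat_map g (seq 0 p)) = rsum p (fun j => sumA s (g j)).
Proof.
  induction p. reflexivity.
  rewrite seq_S, flat_map_app, sumA_app, rsum_S, IHp. simpl. rewrite app_nil_r. reflexivity.
Qed.

Lemma rsum_const M c : rsum M (fun _ => c) = INR M * c.
Proof. induction M. rewrite rsum_0; simpl; ring. rewrite rsum_S, IHM, S_INR; ring. Qed.

Lemma seg_approx s a l M : 0 < s -> 0 <= l -> (1 <= M)%nat -> a + l <= 0 -> s * (l / INR M) <= 1/2 ->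
  0 <= seg s a l - sumA s (atoms_seg a l M) <= 2 * s * l ^ 2 / INR M.
Proof.
  intros Hs Hl HM Hal Hst.
  assert (HMr : 0 < INR M) by (apply lt_0_INR; lia).
  set (h := l / INR M).
  assert (Hh : 0 <= h) by (unfold h, Rdiv; apply Rmult_le_pos; auto; left; apply Rinv_0_lt_compat; auto).
  assert (HMh : INR M * h = l) by (unfold h; field; lra).
  unfold atoms_seg. fold h. rewrite sumA_seq. simpl.
  assert (Hseg : seg s a l = rsum M (fun k => seg s (a + INR k * h) h)).
  { unfold seg.
    rewrite (rsum_ext M _ (fun k => (fun k => exp (s * (a + INR k * h)) / s) (S k) - (fun k => exp (s * (a + INR k * h)) / s) k)).
    rewrite (rsum_telescope M (fun k => exp (s * (a + INR k * h)) / s)). simpl. rewrite HMh. replace (a + 0 * h) with a by ring. field. lra.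
    intros k _. rewrite S_INR. replace (a + INR k * h + h) with (a + (INR k + 1) * h) by ring. field. lra. }
  rewrite Hseg, <- rsum_minus.
  assert (Hk : forall k, (k < M)%nat -> 0 <= seg s (a + INR k * h) h - h * exp (s * (a + INR k * h)) <= 2 * s * h ^ 2).
  { intros k Hk. apply piece; auto.
    assert (INR k + 1 <= INR M) by (rewrite <- S_INR; apply le_INR; lia). nra. }
  split. apply rsum_nonneg. intros k Hk'. apply Hk; auto.
  eapply Rle_trans. apply (rsum_le M _ (fun _ => 2 * s * h ^ 2)). intros k Hk'; apply Hk; auto.
  rewrite rsum_const. rewrite <- HMh. right. field. lra.
Qed.

Definition zn (p j : nat) : R := INR j - INR p.

Lemma zn_S p j : zn p (S j) = zn p j + 1.
Proof. unfold zn. rewrite S_INR. ring. Qed.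
Lemma zn_le p j : (j < p)%nat -> zn p j + 1 <= 0.
Proof. intros H. unfold zn. assert (INR (S j) <= INR p) by (apply le_INR; lia). rewrite S_INR in H0. lra. Qed.

Lemma main_identity s p T' d : 0 < s ->
  / s = exp (- s * (INR T' + INR p)) / s + seg s (- (INR T' + INR p)) (INR T')
        + rsum p (fun j => seg s (zn p j) d + seg s (zn p j + d) (1 - d)).
Proof.
  intros Hs.
  rewrite (rsum_ext p _ (fun j => (fun j => exp (s * zn p j) / s) (S j) - (fun j => exp (s * zn p j) / s) j)).
  rewrite (rsum_telescope p (fun j => exp (s * zn p j) / s)).
  unfold seg, zn. replace (INR p - INR p) with 0 by ring. rewrite Rmult_0_r, exp_0.
  replace (- (INR T' + INR p) + INR T') with (INR 0 - INR p) by (simpl; ring).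
  replace (s * - (INR T' + INR p)) with (- s * (INR T' + INR p)) by ring.
  field. lra.
  intros j _. unfold seg. rewrite zn_S. replace (zn p j + d + (1 - d)) with (zn p j + 1) by ring. field. lra.
Qed.

Lemma step_ok s l M : 0 < M -> 2 * (s * l) <= M -> s * (l / M) <= 1/2.
Proof. intros. apply (Rmult_le_reg_r M); [lra|]. replace (s * (l / M) * M) with (s * l) by (field; lra). lra. Qed.

Theorem approx p (e : nat -> R) smin smax : 0 < smin ->
  (forall i, (i < p)%nat -> smin <= e i <= smax) ->
  (forall i j, (i < p)%nat -> (j < p)%nat -> i <> j -> e i <> e j) ->
  exists (A : list (R * R)) (W : nat -> R),
    (forall a, In a A -> 0 < fst a) /\ (forall j, (j < p)%nat -> 0 < W j) /\
    forall i, (i < p)%nat -> / e i = sumA (e i) A + rsum p (fun j => W j * exp (e i * zn p j)).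
Proof.
  intros Hsmin He Hd.
  assert (Hker : forall l : nat -> R, (forall j, (j < p)%nat -> rsum p (fun i => l i * exp (e i * zn p j)) = 0) ->
      forall i, (i < p)%nat -> l i = 0).
  { intros l Hl. apply (descartes p e l (zn p)); auto. intros; rewrite zn_S; lra. }
  destruct (solve_bound p (fun i j => exp (e i * zn p j)) Hker) as [L [HL HLs]].
  set (sm := Rabs smax + 1).
  assert (Hsm : 1 <= sm) by (unfold sm; pose proof (Rabs_pos smax); lra).
  assert (Hsm2 : forall i, (i < p)%nat -> e i <= sm) by (intros i Hi; pose proof (He i Hi); unfold sm; pose proof (Rle_abs smax); lra).
  set (K := INR p + 1).
  assert (HK : 1 <= K) by (unfold K; pose proof (pos_INR p); lra).
  set (L1 := L + 1).
  assert (HL1 : 1 <= L1) by (unfold L1; lra).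
  assert (HX1 : 1 <= L1 * K) by nra.
  assert (HX : 1 <= L1 * K * sm) by nra.
  set (d := / (16 * L1 * K * sm)).
  assert (Hd0 : 0 < d) by (unfold d; apply Rinv_0_lt_compat; lra).
  assert (Hdd : d * (16 * L1 * K * sm) = 1) by (unfold d; field; lra).
  assert (Hd1 : d <= 1/16) by nra.
  destruct (nat_ge (8 * L1 / (smin ^ 2 * d) + 1)) as [T' HT'].
  assert (HT'a : 8 * L1 / (smin ^ 2 * d) * (smin ^ 2 * d) = 8 * L1) by (field; split; nra).
  assert (HT'0 : 0 < 8 * L1 / (smin ^ 2 * d)).
  { unfold Rdiv. apply Rmult_lt_0_compat. lra. apply Rinv_0_lt_compat. nra. }
  assert (HT'b : 8 * L1 <= INR T' * (smin ^ 2 * d)) by nra.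
  assert (HT'1 : 1 <= INR T') by lra.
  set (Q := 16 * L1 * sm * (INR T' ^ 2 + K + INR T' + 1) / d).
  destruct (nat_ge Q) as [M HM].
  assert (HQa : Q * d = 16 * L1 * sm * (INR T' ^ 2 + K + INR T' + 1)) by (unfold Q; field; lra).
  assert (HMd : 16 * L1 * sm * (INR T' ^ 2 + K + INR T' + 1) <= INR M * d) by nra.
  assert (HM1 : (1 <= M)%nat).
  { destruct M. simpl in HMd. nra. lia. }
  assert (HMr : 1 <= INR M) by (apply (le_INR 1); auto).
  assert (HMbig : 2 * sm * (INR T' + 1) <= INR M).
  { assert (INR M * d <= INR M / 16) by (unfold Rdiv; nra).
    assert (2 * sm * (INR T' + 1) <= 16 * L1 * sm * (INR T' ^ 2 + K + INR T' + 1)).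
    { assert (0 <= INR T' ^ 2) by apply pow2_ge_0.
      assert (INR T' + 1 <= L1 * (INR T' ^ 2 + K + INR T' + 1)) by nra.
      nra. }
    lra. }
  set (T := INR T' + INR p).
  set (A0 := atoms_seg (- T) (INR T') M).
  set (Ag := fun j => atoms_seg (zn p j + d) (1 - d) M).
  set (A := A0 ++ flat_map Ag (seq 0 p)).
  set (Rr := fun s => / s - (sumA s A + rsum p (fun j => d * exp (s * zn p j)))).
  set (eps := d / (2 * L1)).
  assert (Hbound : forall s, smin <= s <= sm -> 0 <= Rr s <= eps).
  { intros s Hs.
    assert (Hs0 : 0 < s) by lra.
    assert (ER : Rr s = exp (- s * T) / s + (seg s (- T) (INR T') - sumA s A0)
               + rsum p (fun j => (seg s (zn p j) d - d * exp (s * zn p j)) + (seg s (zn p j + d) (1 - d) - sumA s (Ag j)))).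
    { unfold Rr. rewrite (main_identity s p T' d) by auto. fold T.
      unfold A. rewrite sumA_app, sumA_flat.
      rewrite !rsum_plus, !rsum_minus. ring. }
    assert (Et : 0 <= exp (- s * T) / s <= d / (8 * L1)).
    { assert (HT : INR T' <= T) by (unfold T; pose proof (pos_INR p); lra).
      pose proof (exp_ge_1x (s * T)) as X1.
      assert (E1 : exp (- s * T) * exp (s * T) = 1).
      { rewrite <- exp_plus. replace (- s * T + s * T) with 0 by ring. apply exp_0. }
      pose proof (exp_pos (- s * T)). pose proof (exp_pos (s * T)).
      split. unfold Rdiv; apply Rmult_le_pos; [lra|left; apply Rinv_0_lt_compat; lra].
      apply (Rmult_le_reg_r (s * (8 * L1) * exp (s * T))). apply Rmult_lt_0_compat; [apply Rmult_lt_0_compat; lra| lra].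
      replace (exp (- s * T) / s * (s * (8 * L1) * exp (s * T))) with (8 * L1 * (exp (- s * T) * exp (s * T))) by (field; lra).
      rewrite E1.
      replace (d / (8 * L1) * (s * (8 * L1) * exp (s * T))) with (d * s * exp (s * T)) by (field; lra).
      assert (s * INR T' <= exp (s * T)) by nra.
      assert (Q1 : smin * smin <= s * s) by nra.
      assert (Q2 : smin ^ 2 * INR T' <= s * s * INR T') by (simpl; apply Rmult_le_compat_r; lra).
      assert (Q3 : d * s * (s * INR T') <= d * s * exp (s * T)).
      { apply Rmult_le_compat_l. apply Rmult_le_pos; lra. auto. }
      assert (Q4 : smin ^ 2 * INR T' * d <= s * s * INR T' * d) by (apply Rmult_le_compat_r; lra).
      nra. }
    assert (Es : 0 <= seg s (- T) (INR T') - sumA s A0 <= 2 * sm * INR T' ^ 2 / INR M).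
    { unfold A0. pose proof (seg_approx s (- T) (INR T') M Hs0 ltac:(lra) HM1) as X.
      destruct X as [X1 X2].
      unfold T; pose proof (pos_INR p); lra.
      apply step_ok. lra. nra.
      split; auto. eapply Rle_trans. apply X2. unfold Rdiv. apply Rmult_le_compat_r.
      left; apply Rinv_0_lt_compat; lra. apply Rmult_le_compat_r. apply pow2_ge_0. lra. }
    assert (Ej : forall j, (j < p)%nat ->
       0 <= (seg s (zn p j) d - d * exp (s * zn p j)) + (seg s (zn p j + d) (1 - d) - sumA s (Ag j))
         <= 2 * sm * d ^ 2 + 2 * sm / INR M).
    { intros j Hj. pose proof (zn_le p j Hj).
      pose proof (piece s (zn p j) d Hs0 ltac:(lra) ltac:(nra) ltac:(lra)) as [P1 P2].
      pose proof (seg_approx s (zn p j + d) (1 - d) M Hs0 ltac:(lra) HM1 ltac:(lra)) as X.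
      destruct X as [X1 X2].
      apply step_ok. lra. nra.
      unfold seg, Ag in *.
      assert (2 * s * (1 - d) ^ 2 / INR M <= 2 * sm / INR M).
      { unfold Rdiv. apply Rmult_le_compat_r. left; apply Rinv_0_lt_compat; lra.
        assert (0 <= (1 - d) ^ 2 <= 1) by (simpl; nra). nra. }
      assert (2 * s * d ^ 2 <= 2 * sm * d ^ 2) by (simpl; nra).
      split; lra. }
    assert (Esum : 0 <= rsum p (fun j => (seg s (zn p j) d - d * exp (s * zn p j)) + (seg s (zn p j + d) (1 - d) - sumA s (Ag j)))
                   <= INR p * (2 * sm * d ^ 2 + 2 * sm / INR M)).
    { split. apply rsum_nonneg; intros; apply Ej; auto.
      rewrite <- rsum_const. apply rsum_le; intros; apply Ej; auto. }
    rewrite ER. split. lra.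
    assert (C1 : INR p * (2 * sm * d ^ 2) <= d / (8 * L1)).
    { apply (Rmult_le_reg_r (8 * L1)). lra.
      replace (d / (8 * L1) * (8 * L1)) with d by (field; lra).
      assert (INR p <= K) by (unfold K; lra).
      assert (INR p * (2 * sm * d ^ 2) * (8 * L1) <= K * (2 * sm * d ^ 2) * (8 * L1)).
      { apply Rmult_le_compat_r. lra. apply Rmult_le_compat_r. simpl; nra. auto. }
      assert (K * (2 * sm * d ^ 2) * (8 * L1) = d * (d * (16 * L1 * K * sm))) by (simpl; ring).
      rewrite Hdd in H1. lra. }
    assert (C2 : 2 * sm * INR T' ^ 2 / INR M + INR p * (2 * sm / INR M) <= d / (8 * L1)).
    { apply (Rmult_le_reg_r (8 * L1 * INR M)). nra.
      replace ((2 * sm * INR T' ^ 2 / INR M + INR p * (2 * sm / INR M)) * (8 * L1 * INR M))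
        with (16 * L1 * sm * (INR T' ^ 2 + INR p)) by (field; lra).
      replace (d / (8 * L1) * (8 * L1 * INR M)) with (INR M * d) by (field; lra).
      assert (16 * L1 * sm * (INR T' ^ 2 + INR p) <= 16 * L1 * sm * (INR T' ^ 2 + K + INR T' + 1)).
      { apply Rmult_le_compat_l. nra. unfold K; lra. }
      lra. }
    assert (d / (8 * L1) * 3 <= eps).
    { unfold eps. unfold Rdiv. rewrite !Rinv_mult. 
      assert (0 < / L1) by (apply Rinv_0_lt_compat; lra). nra. }
    assert (INR p * (2 * sm * d ^ 2 + 2 * sm / INR M) = INR p * (2 * sm * d ^ 2) + INR p * (2 * sm / INR M)) by ring.
    lra. }
  assert (Heps : 0 <= eps) by (unfold eps; unfold Rdiv; apply Rmult_le_pos; [lra|left; apply Rinv_0_lt_compat; lra]).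
  destruct (HLs (fun t => Rr (e t)) eps Heps) as [g [Hg1 Hg2]].
  { intros t Ht. rewrite Rabs_right. apply Hbound. split. apply He; auto. apply Hsm2; auto.
    apply Rle_ge, Hbound. split. apply He; auto. apply Hsm2; auto. }
  exists A, (fun j => d + g j). split; [|split].
  - intros a Ha. unfold A in Ha. apply in_app_or in Ha. destruct Ha as [Ha|Ha].
    + unfold A0, atoms_seg in Ha. apply in_map_iff in Ha. destruct Ha as [k [<- _]]. simpl.
      unfold Rdiv. apply Rmult_lt_0_compat. lra. apply Rinv_0_lt_compat; lra.
    + apply in_flat_map in Ha. destruct Ha as [j [_ Ha]]. unfold Ag, atoms_seg in Ha.
      apply in_map_iff in Ha. destruct Ha as [k [<- _]]. simpl.
      unfold Rdiv. apply Rmult_lt_0_compat. lra. apply Rinv_0_lt_compat; lra.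
  - intros j Hj. pose proof (Hg2 j Hj). pose proof (Rle_abs (- g j)). rewrite Rabs_Ropp in H0.
    assert (L * eps < d / 2).
    { unfold eps. apply (Rmult_lt_reg_r (2 * L1)). lra.
      replace (L * (d / (2 * L1)) * (2 * L1)) with (L * d) by (field; lra).
      replace (d / 2 * (2 * L1)) with (L1 * d) by (field; lra). unfold L1; nra. }
    lra.
  - intros i Hi. pose proof (Hg1 i Hi) as G. simpl in G.
    rewrite (rsum_ext p _ (fun j => d * exp (e i * zn p j) + exp (e i * zn p j) * g j)).
    rewrite rsum_plus, G. unfold Rr. ring.
    intros; ring.
Qed.

Lemma c_bounds n (c : nat -> R) : (forall i, (i < n)%nat -> 0 < c i) ->
  exists a b, 0 < a /\ forall i, (i < n)%nat -> a <= c i <= b.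
Proof.
  induction n; intros hc. exists 1, 1. split. lra. intros; lia.
  destruct IHn as [a [b [Ha Hab]]]; [intros; apply hc; lia|].
  exists (Rmin a (c n)), (Rmax b (c n)). split.
  apply Rmin_pos; [auto | apply hc; lia].
  intros i Hi. destruct (Nat.eq_dec i n). subst. split. apply Rmin_r. apply Rmax_r.
  pose proof (Hab i ltac:(lia)). pose proof (Rmin_l a (c n)). pose proof (Rmax_l b (c n)). lra.
Qed.

Definition sumc (c : nat -> R) l := fold_right Rplus 0 (map c l).

Lemma sumc_bounds (c : nat -> R) n a b l : (forall i, (i < n)%nat -> a <= c i <= b) ->
  Forall (fun i => (i < n)%nat) l -> INR (length l) * a <= sumc c l <= INR (length l) * b.
Proof.
  intros H Hf. induction Hf; unfold sumc in *; cbn [length map fold_right]. simpl; lra.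
  rewrite S_INR. pose proof (H x H0). lra.
Qed.

Fixpoint tuples (n k : nat) : list (list nat) :=
  match k with
  | O => [[]]
  | S k' => flat_map (fun j => map (cons j) (tuples n k')) (seq 0 n)
  end.

Lemma tuples_complete n k l : valid_index k n l -> In l (tuples n k).
Proof.
  revert l; induction k; intros l [Hl Hf].
  - destruct l; simpl in *; [auto|lia].
  - destruct l as [|x l]; simpl in Hl. lia. inversion Hf; subst.
    simpl. apply in_flat_map. exists x. split. apply in_seq; lia.
    apply in_map. apply IHk. split; auto.
Qed.

Lemma tuples_sound n k l : In l (tuples n k) -> valid_index k n l.
Proof.
  revert l; induction k; intros l H; simpl in H.
  - destruct H as [<-|[]]. split; auto.
  - apply in_flat_map in H. destruct H as [x [Hx H]]. apply in_map_iff in H.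
    destruct H as [l' [<- H]]. apply in_seq in Hx. destruct (IHk l' H) as [A B].
    split. simpl; lia. constructor; auto. lia.
Qed.

Lemma rprod_exp (c : nat -> R) al y l :
  rprod (fun t => exp (al + c t * y)) l = exp (INR (length l) * al + y * sumc c l).
Proof.
  induction l; unfold rprod, sumc in *; simpl. rewrite <- exp_0; f_equal; simpl; ring.
  rewrite IHl, <- exp_plus. f_equal. replace (match length l with 0%nat => 1 | S _ => INR (length l) + 1 end) with (INR (length l) + 1) by (destruct (length l); simpl; ring). ring.
Qed.

Lemma sumA_nth s F : sumA s F = rsum (length F) (fun k => fst (nth k F (1, 0)) * exp (s * snd (nth k F (1, 0)))).
Proof.
  induction F. reflexivity.
  simpl length. rewrite rsum_shift. unfold sumA in *; simpl. rewrite IHF. reflexivity.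
Qed.

Lemma rsum_split n p f : (n <= p)%nat -> rsum p f = rsum n f + rsum (p - n) (fun k => f (n + k)%nat).
Proof. intros H. replace p with (n + (p - n))%nat at 1 by lia. apply rsum_app. Qed.

Lemma distinct_scp m n c : (2 <= m)%nat -> (forall i, (i < n)%nat -> 0 < c i) ->
  (forall i j, (i < n)%nat -> (j < n)%nat -> i <> j -> c i <> c j) ->
  strongly_completely_positive m n (cauchy_tensor c).
Proof.
  intros hm hc hd.
  destruct (c_bounds n c hc) as [a [b [Ha Hab]]].
  set (Sl := nodup Req_dec_T (map (sumc c) (tuples n m))).
  set (p := length Sl).
  set (e := fun i => nth i Sl 0).
  assert (HSnd : NoDup Sl) by apply NoDup_nodup.
  assert (HeS : forall i, (i < p)%nat -> exists l, valid_index m n l /\ e i = sumc c l).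
  { intros i Hi. assert (In (e i) Sl) by (apply nth_In; auto).
    apply nodup_In in H. apply in_map_iff in H. destruct H as [l [H1 H2]].
    exists l. split. apply tuples_sound; auto. auto. }
  assert (Hmr : 0 < INR m) by (apply lt_0_INR; lia).
  assert (He : forall i, (i < p)%nat -> INR m * a <= e i <= INR m * b).
  { intros i Hi. destruct (HeS i Hi) as [l [[Hl Hf] E]]. rewrite E.
    pose proof (sumc_bounds c n a b l Hab Hf). rewrite Hl in H. lra. }
  assert (Hed : forall i j, (i < p)%nat -> (j < p)%nat -> i <> j -> e i <> e j).
  { intros i j Hi Hj Hij E. apply Hij. eapply (proj1 (NoDup_nth Sl 0)); eauto. }
  assert (HinS : forall idx, valid_index m n idx -> exists i, (i < p)%nat /\ e i = sumc c idx).
  { intros idx Hv. assert (In (sumc c idx) Sl).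
    { apply nodup_In. apply in_map. apply tuples_complete; auto. }
    apply (In_nth Sl _ 0) in H. destruct H as [i [Hi E]]. exists i; auto. }
  assert (Hnp : (n <= p)%nat).
  { unfold p. rewrite <- (length_seq n 0) at 1. rewrite <- (length_map (fun i => INR m * c i)). apply (NoDup_incl_length (l:=map (fun i => INR m * c i) (seq 0 n)) (l':=Sl)).
    - apply NoDup_map_NoDup_ForallPairs. intros x y Hx Hy E. apply in_seq in Hx, Hy.
      destruct (Nat.eq_dec x y); auto. exfalso. apply (hd x y); try lia.
      apply Rmult_eq_reg_l in E; auto. lra. apply seq_NoDup.
    - intros v Hv. apply in_map_iff in Hv. destruct Hv as [i [<- Hi]]. apply in_seq in Hi.
      apply nodup_In. apply in_map_iff. exists (repeat i m). split.
      + unfold sumc. rewrite (fold_sum_const c (c i)). rewrite repeat_length; auto.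
        intros t Ht. apply repeat_spec in Ht. subst; auto.
      + apply tuples_complete. split. apply repeat_length. apply Forall_forall.
        intros t Ht. apply repeat_spec in Ht. lia. }
  destruct (approx p e (INR m * a) (INR m * b) ltac:(nra) He Hed) as [A [W [HA [HW Hid]]]].
  set (Fl := A ++ map (fun j => (W j, zn p j)) (seq 0 p)).
  set (r := length Fl).
  set (u := fun k i => exp (ln (fst (nth k Fl (1, 0))) / INR m + c i * snd (nth k Fl (1, 0)))).
  assert (Hpos : forall k, (k < r)%nat -> 0 < fst (nth k Fl (1, 0))).
  { intros k Hk. assert (In (nth k Fl (1, 0)) Fl) by (apply nth_In; auto).
    unfold Fl in H. apply in_app_or in H. destruct H as [H|H]. auto.
    apply in_map_iff in H. destruct H as [j [E Hj]]. apply in_seq in Hj. unfold Fl; rewrite <- E. simpl. apply HW; lia. }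
  assert (Hnth : forall j, (j < p)%nat -> nth (length A + j) Fl (1, 0) = (W j, zn p j)).
  { intros j Hj. unfold Fl. rewrite app_nth2 by lia. replace (length A + j - length A)%nat with j by lia.
    rewrite (nth_indep _ _ (W 0%nat, zn p 0%nat)) by (rewrite length_map, length_seq; lia).
    rewrite (map_nth (fun j => (W j, zn p j))). rewrite seq_nth; auto. }
  assert (Hr : r = (length A + p)%nat) by (unfold r, Fl; rewrite length_app, length_map, length_seq; reflexivity).
  exists r, u. split; [|split].
  - intros k i _ _. left. apply exp_pos.
  - intros idx Hv. destruct (HinS idx Hv) as [i [Hi Ei]].
    unfold cauchy_tensor. fold (sumc c idx). rewrite <- Ei, Hid by auto.
    assert (E2 : sumA (e i) A + rsum p (fun j => W j * exp (e i * zn p j)) = sumA (e i) Fl).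
    { unfold Fl. rewrite sumA_app, sumA_seq. reflexivity. }
    rewrite E2, sumA_nth. fold r. apply rsum_ext. intros k Hk.
    unfold u. rewrite rprod_exp. destruct Hv as [Hl _]. rewrite Hl, Ei.
    replace (INR m * (ln (fst (nth k Fl (1, 0))) / INR m) + snd (nth k Fl (1, 0)) * sumc c idx)
      with (ln (fst (nth k Fl (1, 0))) + sumc c idx * snd (nth k Fl (1, 0))) by (field; lra).
    rewrite exp_plus, exp_ln; auto.
  - intros y.
    assert (Hker : forall l : nat -> R, (forall j, (j < n)%nat -> rsum n (fun i => l i * exp (c i * zn p j)) = 0) ->
      forall i, (i < n)%nat -> l i = 0).
    { intros l Hl. apply (descartes n c l (zn p)); auto. intros; rewrite zn_S; lra. }
    destruct (LA.solve n (fun i j => exp (c i * zn p j)) Hker y) as [g Hg].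
    exists (fun k => if andb (Nat.leb (length A) k) (Nat.ltb (k - (length A)) n)
                     then g (k - (length A))%nat / exp (ln (W (k - (length A))%nat) / INR m) else 0).
    intros i Hi. rewrite <- Hg by auto. rewrite Hr.
    rewrite rsum_app. rewrite (rsum_ext (length A) _ (fun _ => 0)). rewrite rsum_zero, Rplus_0_l.
    rewrite (rsum_split n p) by lia.
    rewrite (rsum_ext (p - n) _ (fun _ => 0)). rewrite rsum_zero, Rplus_0_r.
    apply rsum_ext. intros j Hj.
    + replace (Nat.leb (length A) ((length A) + j)) with true by (symmetry; apply Nat.leb_le; lia).
      replace ((length A) + j - (length A))%nat with j by lia.
      replace (Nat.ltb j n) with true by (symmetry; apply Nat.ltb_lt; lia). simpl.
      unfold u. rewrite Hnth by lia. simpl. rewrite exp_plus. field. apply Rgt_not_eq, exp_pos.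
    + intros j Hj. replace (Nat.leb (length A) ((length A) + (n + j))) with true by (symmetry; apply Nat.leb_le; lia).
      replace (Nat.ltb ((length A) + (n + j) - (length A)) n) with false by (symmetry; apply Nat.ltb_ge; lia). simpl. ring.
    + intros k Hk. replace (Nat.leb (length A) k) with false by (symmetry; apply Nat.leb_gt; lia). simpl. ring.
Qed.

Theorem mainTheorem18 (m n : nat) (c : nat -> R)
  (hm : (2 <= m)%nat)
  (hc : forall i, (i < n)%nat -> 0 < c i) :
  ((forall i j, (i < n)%nat -> (j < n)%nat -> i <> j -> c i <> c j)
     <-> strongly_doubly_nonnegative m n (cauchy_tensor c))
  /\
  (strongly_doubly_nonnegative m n (cauchy_tensor c)
     <-> strongly_completely_positive m n (cauchy_tensor c)).
Proof.
  split; split.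
  - intro D. apply scp_sdn; auto. apply distinct_scp; auto.
  - intro H. apply (sdn_distinct m n c); auto.
  - intro H. apply distinct_scp; auto. apply (sdn_distinct m n c); auto.
  - apply scp_sdn; auto.
Qed.
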